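(* Let $\mathbf{M}$ be symmetric, $\epsilon>0$, and $\mathbf{X}=[\bm{x}_1,\dots,\bm{x}_r]\in\mathrm{St}(N,r)$ with $\|\mathrm{grad}\,g(\mathbf{X})\|_F\le\epsilon$. Write $\mathbf{X}^\top\mathbf{M}\mathbf{X}=\mathbf{D}_{\mathbf{M}}+\mathbf{E}_{\mathbf{M}}$ with $\mathbf{D}_{\mathbf{M}}$ its diagonal part and $\mathbf{E}_{\mathbf{M}}$ its off-diagonal part. Then $\|\mathbf{E}_{\mathbf{M}}\|_F\le2\epsilon$, $\|\mathbf{X}\mathbf{X}^\top\mathbf{M}\mathbf{X}-\mathbf{M}\mathbf{X}\|_F\le\epsilon$, $\|\mathbf{X}\mathbf{D}_{\mathbf{M}}-\mathbf{M}\mathbf{X}\|_F\le3\epsilon$, and for each $j\in[r]$ there is an eigenvalue $\lambda_{i_j}$ of $\mathbf{M}$ with $|\bm{x}_j^\top\mathbf{M}\bm{x}_j-\lambda_{i_j}|\le3\epsilon$.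
   Context: $\mathrm{St}(N,r)=\{\mathbf{X}\in\mathbb{R}^{N\times r}:\mathbf{X}^\top\mathbf{X}=\mathbf{I}_r\}$, $\mathbf{N}=\mathrm{diag}(r,r-1,\dots,1)$, $g(\mathbf{X})=-\tfrac12\mathrm{tr}(\mathbf{X}^\top\mathbf{M}\mathbf{X}\mathbf{N})$ on $\mathrm{St}(N,r)$ with Riemannian gradient $\mathrm{grad}\,g(\mathbf{X})=(\mathbf{X}\mathbf{X}^\top-\mathbf{I}_N)\mathbf{M}\mathbf{X}\mathbf{N}-\tfrac12\mathbf{X}[\mathbf{X}^\top\mathbf{M}\mathbf{X},\mathbf{N}]$, $[\mathbf{A},\mathbf{B}]=\mathbf{A}\mathbf{B}-\mathbf{B}\mathbf{A}$. *)

(* Defs.v *)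
From mathcomp Require Import all_boot all_order all_algebra.
Set Implicit Arguments. Unset Strict Implicit. Unset Printing Implicit Defensive.
Import Order.TTheory GRing.Theory Num.Theory.
Local Open Scope ring_scope.

Definition stiefel (R : rcfType) (n r : nat) (X : 'M[R]_(n, r)) : Prop :=
  X^T *m X = 1%:M.

Definition Nmat (R : rcfType) (r : nat) : 'M[R]_r :=
  diag_mx (\row_(i < r) ((r - i)%N)%:R).

Definition commr (R : rcfType) (r : nat) (A B : 'M[R]_r) : 'M[R]_r :=
  A *m B - B *m A.

(* Riemannian gradient of g(X) = -1/2 tr(X^T M X N) on St(n, r) *)
Definition gradg (R : rcfType) (n r : nat) (M : 'M[R]_n) (X : 'M[R]_(n, r))
  : 'M[R]_(n, r) :=
  (X *m X^T - 1%:M) *m M *m X *m Nmat R r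
  - 2^-1 *: (X *m commr (X^T *m M *m X) (Nmat R r)).

Definition frob (R : rcfType) (m p : nat) (A : 'M[R]_(m, p)) : R :=
  Num.sqrt (\sum_(i < m) \sum_(j < p) A i j ^+ 2).

Definition diag_part (R : rcfType) (r : nat) (A : 'M[R]_r) : 'M[R]_r :=
  \matrix_(i, j) (if i == j then A i j else 0).
Definition offdiag_part (R : rcfType) (r : nat) (A : 'M[R]_r) : 'M[R]_r :=
  \matrix_(i, j) (if i == j then 0 else A i j).

(* Main.v *)
Require Import Defs.
From mathcomp Require Import all_boot all_order all_algebra.
From mathcomp.real_closed Require Import complex.
From mathcomp Require Import ring lra.
Set Implicit Arguments. Unset Strict Implicit. Unset Printing Implicit Defensive.
Import Order.TTheory GRing.Theory Num.Theory.
Local Open Scope ring_scope.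
Local Open Scope sesquilinear_scope.

Lemma spec_real (R : rcfType) n (B : 'M[R]_n) (u : 'rV[R]_n) :
  B^T = B -> (u *m u^T) 0 0 = 1 ->
  exists mu, eigenvalue B mu /\ mu ^+ 2 <= ((u *m B) *m (u *m B)^T) 0 0.
Proof.
move=> Bsym uu.
have [i1 _] : exists i : 'I_n, True.
  case: n B u uu {Bsym} => [|k] B u; last by exists ord0.
  by rewrite mxE big_ord0 => /esym/eqP; rewrite oner_eq0.
pose toC := real_complex R.
have toCreal x : toC x \is Num.real by apply/complex_realP; exists x.
have conjR x : (toC x)^* = toC x by rewrite conj_Creal.
have hCT m p (K : 'M[R]_(m, p)) : (map_mx toC K)^t* = map_mx toC K^T.
  by apply/matrixP => i j; rewrite !mxE conjR.
set A := map_mx toC B.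
have Aherm : A \is hermsymmx.
  apply/is_hermitianmxP; rewrite expr0 scale1r; apply/matrixP => i j.
  by rewrite !mxE conjR -[in LHS]Bsym mxE.
have /orthomx_spectralP hA := hermitian_normalmx Aherm.
have Dreal := hermitian_spectral_diag_real Aherm.
have Pu := spectral_unitarymx A.
have Punit := spectral_unit A.
set P := spectralmx A in hA Pu Punit.
set D := spectral_diag A in hA Dreal.
have Pinv : invmx P = P^t* by rewrite invmx_unitary.
have PtP : P^t* *m P = 1%:M by have := mulmxKtV (1%:M) Pu erefl; rewrite mul1mx.
pose dr : 'rV[R]_n := map_mx (@complex.Re R) D.
have hD : D = map_mx toC dr.
  apply/matrixP => i j; rewrite !mxE; apply/esym/RRe_real.
  exact: (mxOverP Dreal).
pose i0 := [arg min_(i < i1) (dr 0 i ^+ 2)]%O.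
have i0min : forall j, dr 0 i0 ^+ 2 <= dr 0 j ^+ 2.
  rewrite /i0; case: arg_minP => // i _ H j; exact: H.
exists (dr 0 i0); split.
  rewrite eigenvalue_root_char -(fmorph_root toC) map_char_poly.
  rewrite -eigenvalue_root_char; apply/eigenvalueP.
  exists (delta_mx 0 i0 *m P).
    rewrite -/A hA !mulmxA -(mulmxA _ P) mulmxV // mulmx1 -(rowE i0 (diag_mx D)) row_diag_mx -scalemxAl.
    by rewrite hD mxE.
  apply/eqP => /(congr1 (mulmx^~ (invmx P))); rewrite mulmxK // mul0mx.
  by move/matrixP/(_ 0 i0); rewrite !mxE !eqxx /= => /eqP; rewrite oner_eq0.
pose U := map_mx toC u.
pose W := U *m P^t*.
have WW : W *m W^t* = U *m U^t*.
  have PCK : (P^t*)^t* = P by apply/matrixP => i j; rewrite !mxE conjCK.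
  rewrite /W trmx_mul map_mxM PCK mulmxA -(mulmxA U) PtP mulmx1.
  apply/matrixP => i j; rewrite !mxE; apply: eq_bigr => k _; by rewrite !mxE.
have e1 : toC ((u *m u^T) 0 0) = \sum_k W 0 k * (W 0 k)^*.
  have -> : toC ((u *m u^T) 0 0) = (W *m W^t*) 0 0.
    by rewrite WW /U hCT -map_mxM [RHS]mxE.
  by rewrite mxE; apply: eq_bigr => k _; rewrite !mxE.
have YE : U *m A = W *m diag_mx D *m P by rewrite hA Pinv !mulmxA.
clearbody W.
have DCT : (diag_mx D)^t* = diag_mx D.
  apply/matrixP => i j; rewrite !mxE rmorphMn /= hD !mxE conjR eq_sym.
  by case: (i =P j) => [->|].
have PPt : P *m P^t* = 1%:M by apply/unitarymxP.
have e2 : toC (((u *m B) *m (u *m B)^T) 0 0) =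
    \sum_k W 0 k * (W 0 k)^* * toC (dr 0 k ^+ 2).
  have -> : toC (((u *m B) *m (u *m B)^T) 0 0) = 
      ((U *m A) *m (U *m A)^t*) 0 0.
    by rewrite /U /A -map_mxM hCT -map_mxM [RHS]mxE.
  have PCK : (P^t*)^t* = P by apply/matrixP => i j; rewrite !mxE conjCK.
  rewrite YE.
  rewrite (trmx_mul (W *m diag_mx D)) trmx_mul !map_mxM DCT.
  rewrite !mulmxA -(mulmxA _ P) PPt mulmx1 !mul_mx_diag [LHS]mxE.
  apply: eq_bigr => k _; rewrite !mxE hD !mxE; ring.
have e3 : toC (dr 0 i0 ^+ 2) = \sum_k W 0 k * (W 0 k)^* * toC (dr 0 i0 ^+ 2).
  by rewrite -mulr_suml -e1 uu /toC rmorph1 mul1r.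
rewrite -lecR -/toC e2 e3; apply: ler_sum => k _.
by apply: ler_wpM2l; [exact: mul_conjC_ge0 | rewrite lecR].
Qed.

Definition ss (R : rcfType) m p (K : 'M[R]_(m, p)) : R :=
  \sum_i \sum_j K i j ^+ 2.

Lemma ss_ge0 (R : rcfType) m p (K : 'M[R]_(m, p)) : 0 <= ss K.
Proof. by apply: sumr_ge0 => i _; apply: sumr_ge0 => j _; exact: sqr_ge0. Qed.

Lemma ss_tr (R : rcfType) m p (K : 'M[R]_(m, p)) : ss K = \tr (K^T *m K).
Proof.
rewrite /ss /mxtrace exchange_big; apply: eq_bigr => j _; rewrite mxE.
by apply: eq_bigr => i _; rewrite !mxE expr2.
Qed.

Lemma ss_sub (R : rcfType) m p (K L : 'M[R]_(m, p)) :
  ss (K - L) = ss K + ss L - 2 * \tr (K^T *m L).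
Proof.
rewrite !ss_tr.
have -> : (K - L)^T = K^T - L^T by apply/matrixP => i j; rewrite !mxE.
rewrite mulmxBl !mulmxBr !raddfB /=.
have -> : \tr (L^T *m K) = \tr (K^T *m L).
  by rewrite -mxtrace_tr trmx_mul trmxK.
lra.
Qed.

Lemma ss_scale (R : rcfType) m p a (K : 'M[R]_(m, p)) :
  ss (a *: K) = a ^+ 2 * ss K.
Proof.
rewrite /ss mulr_sumr; apply: eq_bigr => i _; rewrite mulr_sumr.
by apply: eq_bigr => j _; rewrite mxE exprMn.
Qed.

Lemma ss_orth (R : rcfType) n m p (X : 'M[R]_(n, m)) (K : 'M[R]_(m, p)) :
  X^T *m X = 1%:M -> ss (X *m K) = ss K.
Proof.
by move=> H; rewrite !ss_tr trmx_mul mulmxA -(mulmxA K^T) H mulmx1.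
Qed.

Lemma ss_le (R : rcfType) m p (K L : 'M[R]_(m, p)) :
  (forall i j, K i j ^+ 2 <= L i j ^+ 2) -> ss K <= ss L.
Proof. by move=> H; apply: ler_sum => i _; apply: ler_sum => j _. Qed.

Lemma frob_ss (R : rcfType) m p (K : 'M[R]_(m, p)) c :
  0 <= c -> ss K <= c ^+ 2 -> frob K <= c.
Proof.
move=> c0 h; change (Num.sqrt (ss K) <= c).
by rewrite -(ger0_norm c0) -sqrtr_sqr ler_sqrt ?exprn_ge0.
Qed.

Lemma ss_frob (R : rcfType) m p (K : 'M[R]_(m, p)) c :
  frob K <= c -> ss K <= c ^+ 2.
Proof.
move=> h; have s0 := sqrtr_ge0 (ss K).
rewrite -(sqr_sqrtr (ss_ge0 K)) ler_sqr ?nnegrE //.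
exact: le_trans h.
Qed.

Lemma col_dot (R : rcfType) n r (Y Z : 'M[R]_(n, r)) j k :
  ((col j Y)^T *m col k Z) 0 0 = (Y^T *m Z) j k.
Proof. by rewrite !mxE; apply: eq_bigr => l _; rewrite !mxE. Qed.

Lemma diag_partE (R : rcfType) r (B : 'M[R]_r) :
  diag_part B = diag_mx (\row_i B i i).
Proof.
apply/matrixP=> i k; rewrite !mxE; case: eqP => [->|]; by rewrite ?mulr1n ?mulr0n.
Qed.

Lemma diag_offE (R : rcfType) r (B : 'M[R]_r) :
  diag_part B = B - offdiag_part B.
Proof.
by apply/matrixP => i j; rewrite !mxE; case: eqP; rewrite ?subr0 ?subrr.
Qed.

Lemma col_quad (R : rcfType) n r (Y : 'M[R]_(n, r)) (K : 'M[R]_n) j :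
  ((col j Y)^T *m K *m col j Y) 0 0 = (Y^T *m K *m Y) j j.
Proof.
rewrite !mxE; apply: eq_bigr => k _; rewrite !mxE; congr (_ * _).
by apply: eq_bigr => l _; rewrite !mxE.
Qed.

Theorem mainTheorem7 (R : rcfType) (n r : nat) (M : 'M[R]_n) (eps : R)
  (X : 'M[R]_(n, r)) :
  M^T = M -> 0 < eps -> stiefel X -> frob (gradg M X) <= eps ->
  let A := X^T *m M *m X in
  [/\ frob (offdiag_part A) <= 2 * eps,
      frob (X *m X^T *m M *m X - M *m X) <= eps,
      frob (X *m diag_part A - M *m X) <= 3 * eps &
      forall j : 'I_r, exists lam : R,
        eigenvalue M lam /\
        `| ((col j X)^T *m M *m col j X) 0 0 - lam | <= 3 * eps].
Proof.
move=> Msym eps0 hX hG A.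
rewrite /stiefel in hX.
have Ms l k : M l k = M k l by rewrite -{1}Msym mxE.
set Nm := Nmat R r.
set Cm := commr A Nm.
set Q0 := (X *m X^T - 1%:M) *m M *m X.
have hQ : X *m X^T *m M *m X - M *m X = Q0 by rewrite /Q0 !mulmxBl mul1mx.
have hPX : (X *m X^T - 1%:M)^T *m X = 0.
  rewrite raddfB /= trmx_mul trmxK trmx1 mulmxBl -mulmxA hX mulmx1 mul1mx.
  by rewrite subrr.
have hQX : Q0^T *m X = 0 by rewrite /Q0 !trmx_mul -!mulmxA hPX !mulmx0.
have hG2 : ss (gradg M X) <= eps ^+ 2 := ss_frob hG.
have hGE : gradg M X = Q0 *m Nm - 2^-1 *: (X *m Cm) by [].
have hssG : ss (gradg M X) = ss (Q0 *m Nm) + ss Cm / 4.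
  rewrite hGE ss_sub ss_scale (ss_orth Cm hX).
  have -> : \tr ((Q0 *m Nm)^T *m (2^-1 *: (X *m Cm))) = 0.
    rewrite -scalemxAr trmx_mul -mulmxA (mulmxA Q0^T) hQX mul0mx mulmx0.
    by rewrite scaler0 linear0.
  by field.
have hNm i j : (Q0 *m Nm) i j = Q0 i j * ((r - j)%N)%:R.
  by rewrite /Nm /Nmat mul_mx_diag !mxE.
have hK : ss Q0 <= ss (Q0 *m Nm).
  apply: ss_le => i j; rewrite hNm exprMn ler_peMr ?sqr_ge0 //.
  by rewrite exprn_ege1 // ler1n subn_gt0 ltn_ord.
have hC i j : Cm i j = A i j * (((r - j)%N)%:R - ((r - i)%N)%:R).
  rewrite /Cm /commr /Nm /Nmat mul_mx_diag mul_diag_mx !mxE; ring.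
have hE : ss (offdiag_part A) <= ss Cm.
  apply: ss_le => i j; rewrite hC /offdiag_part mxE.
  case: eqP => [_|/eqP ne]; first by rewrite expr2 mul0r sqr_ge0.
  rewrite exprMn ler_peMr ?sqr_ge0 //.
  rewrite (natrB _ (ltnW (ltn_ord j))) (natrB _ (ltnW (ltn_ord i))).
  have -> : (r%:R - j%:R) - (r%:R - i%:R) = i%:R - j%:R :> R by ring.
  case: (ltngtP i j) => [lt|lt|eq].
  - rewrite -opprB sqrrN -(natrB _ (ltnW lt)); apply: exprn_ege1.
    by rewrite ler1n subn_gt0.
  - rewrite -(natrB _ (ltnW lt)); apply: exprn_ege1.
    by rewrite ler1n subn_gt0.
  - by case/eqP: ne; apply: val_inj.
have sK0 := ss_ge0 (Q0 *m Nm).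
have sC0 := ss_ge0 Cm.
have e0 : 0 <= eps ^+ 2 by apply: sqr_ge0.
have hdp := diag_partE A.
have hD := diag_offE A.
have hXD : X *m diag_part A - M *m X = Q0 - X *m offdiag_part A.
  by rewrite hD mulmxBr -hQ /A !mulmxA addrAC.
have h3 : ss (X *m diag_part A - M *m X) <= (3 * eps) ^+ 2.
  rewrite hXD ss_sub (ss_orth _ hX) mulmxA hQX mul0mx linear0.
  have -> : (3 * eps) ^+ 2 = 9 * eps ^+ 2 by ring.
  lra.
split.
- apply: frob_ss; first by lra.
  have -> : (2 * eps) ^+ 2 = 4 * eps ^+ 2 by ring.
  lra.
- by rewrite hQ; apply: frob_ss; lra.
- by apply: frob_ss; lra.
move=> j.
set v := col j X.
set d := (v^T *m M *m v) 0 0.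
have hd : d = A j j by rewrite /d col_quad.
have uu : (v^T *m v^T^T) 0 0 = 1 by rewrite trmxK col_dot hX mxE eqxx.
pose B := M - d%:M.
have Bsym : B^T = B by rewrite /B raddfB /= Msym tr_scalar_mx.
have [mu [eigB hmu]] := spec_real Bsym uu.
exists (d + mu); split.
  apply/eigenvalueP; move/eigenvalueP: eigB => [w hw w0]; exists w => //.
  have -> : M = B + d%:M by rewrite /B subrK.
  by rewrite mulmxDr hw mul_mx_scalar addrC scalerDl.
rewrite opprD addrA subrr add0r normrN.
have hrow k : (v^T *m B) 0 k = - (X *m diag_part A - M *m X) k j.
  rewrite hdp mul_mx_diag /B mulmxBr mul_mx_scalar !mxE hd.
  have -> : \sum_l v^T 0 l * M l k = \sum_l M k l * X l j.
    by apply: eq_bigr => l _; rewrite Ms mulrC mxE mxE.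
  have hAjj : \sum_l (X^T *m M) j l * X l j = A j j by rewrite /A [RHS]mxE.
  rewrite hAjj; ring.
have hZ : ((v^T *m B) *m (v^T *m B)^T) 0 0 <= 
    ss (X *m diag_part A - M *m X).
  rewrite mxE.
  have -> : \sum_k (v^T *m B) 0 k * (v^T *m B)^T k 0 =
      \sum_k ((X *m diag_part A - M *m X) k j) ^+ 2.
    apply: eq_bigr => k _; by rewrite [X in _ * X]mxE hrow mulrNN expr2.
  rewrite /ss; apply: ler_sum => k _; rewrite (bigD1 j) //= lerDl.
  by apply: sumr_ge0 => *; exact: sqr_ge0.
have hmu9 : mu ^+ 2 <= 9 * eps ^+ 2.
  have -> : 9 * eps ^+ 2 = (3 * eps) ^+ 2 by ring.
  exact: le_trans hmu (le_trans hZ h3).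
rewrite ler_norml; apply/andP; split; nra.
Qed.
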